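(* Let $\mathfrak{A}$ be a $(\circ,\wedge,\mathsf{A})$-algebra that is representable by partial functions and atomic. Let $\varphi$ be the first-order sentence asserting: for all $a,b,c$, if $a\circ x\le c$ for every atom $x$ with $x\le b$, then $a\circ b\le c$. Then composition in $\mathfrak{A}$ is completely left-distributive over joins if and only if $\mathfrak{A}\models\varphi$.
   Context: A $(\circ,\wedge,\mathsf{A})$-algebra is a set with two binary operations $\circ,\wedge$ and one unary operation $\mathsf{A}$. An algebra of partial functions of this signature is a set of partial functions, with base $X$ the union of all their domains and ranges, closed under: composition $f\circ g=\{(x,z)\mid \exists y\,(x,y)\in f,(y,z)\in g\}$; intersection; antidomain $\mathsf{A}(f)=\{(x,x)\mid x\in X, x\notin\mathrm{dom}(f)\}$. A representation by partial functions is an isomorphism onto such an algebra. The order is $a\le b\iff a\wedge b=a$, with least element $0=\mathsf{A}(a)\circ a$. An atom is a minimal nonzero element; $\mathfrak{A}$ is atomic if every nonzero element is above an atom. Composition is completely left-distributive over joins if for every $a\in\mathfrak{A}$ and every $S\subseteq\mathfrak{A}$ such that $\bigvee S$ exists, $\bigvee\{a\circ s\mid s\in S\}$ exists and equals $a\circ\bigvee S$. *)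

(* Defs.v *)
From Stdlib Require Import Classical.

Section Alg.
Variables (T : Type) (comp meet : T -> T -> T) (A : T -> T).

Definition le (a b : T) : Prop := meet a b = a.

(* least element 0 = A(a) o a; x is nonzero iff x <> A(x) o x
   (in a representable algebra A(a) o a does not depend on a) *)
Definition zero_of (a : T) : T := comp (A a) a.
Definition nonzero (x : T) : Prop := x <> zero_of x.

Definition atom (x : T) : Prop :=
  nonzero x /\ forall y, le y x -> nonzero y -> y = x.

Definition atomic : Prop :=
  forall a, nonzero a -> exists x, atom x /\ le x a.

Definition is_join (S : T -> Prop) (j : T) : Prop :=
  (forall s, S s -> le s j) /\ (forall u, (forall s, S s -> le s u) -> le j u).

Definition comp_complete_left_distributive : Prop :=
  forall (a : T) (S : T -> Prop) (j : T), is_join S j ->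
    is_join (fun y => exists s, S s /\ y = comp a s) (comp a j).

Definition phi : Prop :=
  forall a b c : T,
    (forall x, atom x -> le x b -> le (comp a x) c) -> le (comp a b) c.

(* Representation by partial functions: an injective homomorphism h onto an
   algebra of partial functions (binary relations that are functional) on a
   set X, whose base is the union of domains and ranges. *)
Definition representation (X : Type) (h : T -> X -> X -> Prop) : Prop :=
  let base := fun x : X => exists a y, h a x y \/ h a y x in
  (forall a x y z, h a x y -> h a x z -> y = z) /\
  (forall a b, (forall x y, h a x y <-> h b x y) -> a = b) /\
  (forall a b x z, h (comp a b) x z <-> exists y, h a x y /\ h b y z) /\
  (forall a b x y, h (meet a b) x y <-> h a x y /\ h b x y) /\
  (forall a x y, h (A a) x y <-> x = y /\ base x /\ ~ (exists z, h a x z)).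

Definition representable : Prop :=
  exists (X : Type) (h : T -> X -> X -> Prop), representation X h.

End Alg.

(* Main.v *)
Require Import Defs.
From Stdlib Require Import Classical.

Theorem mainTheorem15 (T : Type) (comp meet : T -> T -> T) (A : T -> T) :
  representable T comp meet A ->
  atomic T comp meet A ->
  (comp_complete_left_distributive T comp meet <-> phi T comp meet A).
Proof.
  intros [X [h Hrep]] Hatomic.
  unfold representation in Hrep.
  destruct Hrep as [Hfun [Hinj [Hcomp [Hmeet HA]]]].
  assert (Hle : forall a b, le T meet a b <-> (forall p q, h a p q -> h b p q)).
  { intros a b; unfold le; split.
    - intros E p q H. rewrite <- E in H. apply Hmeet in H. tauto.
    - intros H. apply Hinj. intros p q. rewrite Hmeet. firstorder. }
  assert (Hnz : forall x, nonzero T comp A x <-> exists p q, h x p q).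
  { intros x; unfold nonzero, zero_of; split.
    - intros Hn. apply NNPP. intros Hno. apply Hn. apply Hinj.
      intros p q. rewrite Hcomp. split.
      + intros H. exfalso. apply Hno. eauto.
      + intros [y [H1 H2]]. apply HA in H1. destruct H1 as [-> [_ H1]].
        exfalso. apply H1. eauto.
    - intros [p [q H]] E. rewrite E in H. apply Hcomp in H.
      destruct H as [y [H1 H2]]. apply HA in H1. destruct H1 as [-> [_ H1]].
      apply H1. eauto. }
  assert (Hmono : forall a s t, le T meet s t -> le T meet (comp a s) (comp a t)).
  { intros a s t Hst. apply Hle. intros p q H. apply Hcomp in H.
    apply Hcomp. destruct H as [y [H1 H2]]. exists y. split; auto.
    apply (proj1 (Hle s t) Hst). auto. }
  split.
  - intros Hcld a b c Hc.
    set (S := fun x => atom T comp meet A x /\ le T meet x b).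
    assert (HJ : is_join T meet S b).
    { split.
      - intros s [_ Hs]; auto.
      - intros u Hu. apply Hle. intros p q Hb.
        apply NNPP. intros Hnu.
        set (d := comp (A (meet b u)) b).
        assert (Hd : h d p q).
        { apply Hcomp. exists p. split; auto. apply HA. split; [auto|split].
          - exists b, q. auto.
          - intros [z Hz]. apply Hmeet in Hz. destruct Hz as [Hz1 Hz2].
            assert (z = q) by (apply (Hfun b p z q); auto). subst z. contradiction. }
        assert (Hdb : le T meet d b).
        { apply Hle. intros p' q' H. apply Hcomp in H. destruct H as [y [H1 H2]].
          apply HA in H1. destruct H1 as [-> _]. auto. }
        destruct (Hatomic d) as [x [Hx Hxd]].
        { apply Hnz. eauto. }
        assert (Hxb : le T meet x b).
        { apply Hle. intros p' q' H. apply (proj1 (Hle d b) Hdb).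
          apply (proj1 (Hle x d) Hxd). auto. }
        assert (Hxu : le T meet x u) by (apply Hu; split; auto).
        destruct (proj1 (Hnz x) (proj1 Hx)) as [p' [q' Hpq]].
        pose proof (proj1 (Hle x d) Hxd p' q' Hpq) as H.
        apply Hcomp in H. destruct H as [y [H1 H2]].
        apply HA in H1. destruct H1 as [-> [_ H1]]. apply H1.
        exists q'. apply Hmeet. split.
        + apply (proj1 (Hle x b) Hxb). auto.
        + apply (proj1 (Hle x u) Hxu). auto. }
    destruct (Hcld a S b HJ) as [_ Hl]. apply Hl.
    intros y [s [[Hs1 Hs2] ->]]. apply Hc; auto.
  - intros Hphi a S j [Hub Hleast]. split.
    + intros y [s [Hs ->]]. apply Hmono. auto.
    + intros u Hu. apply Hphi. intros x Hx Hxj.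
      assert (Hex : exists s, S s /\ le T meet x s).
      { apply NNPP. intros Hno.
        assert (Hj' : le T meet j (comp (A x) j)).
        { apply Hleast. intros s Hs. apply Hle. intros p q Hspq.
          apply Hcomp. exists p. split.
          - apply HA. split; [auto|split].
            + exists s, q. auto.
            + intros [z Hz].
              assert (Hjz : h j p z) by (apply (proj1 (Hle x j) Hxj); auto).
              assert (Hjq : h j p q) by (apply (proj1 (Hle s j) (Hub s Hs)); auto).
              assert (z = q) by (apply (Hfun j p z q); auto). subst z.
              assert (Hm : nonzero T comp A (meet x s)).
              { apply Hnz. exists p, q. apply Hmeet. auto. }
              assert (Hmx : le T meet (meet x s) x).
              { apply Hle. intros p' q' H. apply Hmeet in H. tauto. }
              pose proof (proj2 Hx _ Hmx Hm) as E.
              apply Hno. exists s. split; auto; apply Hle; intros p0 q0 H0; rewrite <- E in H0; apply Hmeet in H0; tauto.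
          - apply (proj1 (Hle s j) (Hub s Hs)). auto. }
        destruct (proj1 (Hnz x) (proj1 Hx)) as [p [q Hpq]].
        assert (Hjpq : h j p q) by (apply (proj1 (Hle x j) Hxj); auto).
        pose proof (proj1 (Hle _ _) Hj' p q Hjpq) as H.
        apply Hcomp in H. destruct H as [y [H1 _]].
        apply HA in H1. destruct H1 as [-> [_ H1]]. apply H1. eauto. }
      destruct Hex as [s [Hs Hxs]].
      pose proof (Hu (comp a s) (ex_intro _ s (conj Hs eq_refl))) as Hus.
      apply Hle. intros p q H.
      apply (proj1 (Hle _ _) Hus). apply (proj1 (Hle _ _) (Hmono a x s Hxs)). auto.
Qed.
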